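(* Let $d\in\mathbb N$, $\mathcal D=\{1,\dots,d\}$, $f\in \mathrm L_2(\mathbb T^d)$ and let $U\subseteq\mathcal P(\mathcal D)$ be a subset of ANOVA terms. Then $$\mathrm T_Uf=\sum_{\mathbf u\in U}\ \sum_{\substack{\mathbf v\in U\\ \mathbf u\subseteq\mathbf v}}(-1)^{|\mathbf v|-|\mathbf u|}\,\mathrm P_{\mathbf u}f.$$
   Context: $\mathbb T=[0,1)$ with periodic identification. For $\mathbf u\subseteq\mathcal D$, $\mathbf u^c=\mathcal D\setminus\mathbf u$, $\mathbf x_{\mathbf u}=(x_i)_{i\in\mathbf u}$. Projection: $\mathrm P_{\mathbf u}f(\mathbf x_{\mathbf u})=\int_{\mathbb T^{|\mathbf u^c|}}f(\mathbf x)\,d\mathbf x_{\mathbf u^c}$, viewed as a function on $\mathbb T^d$. ANOVA terms: $f_{\mathbf u}=\mathrm P_{\mathbf u}f-\sum_{\mathbf v\subsetneq\mathbf u}f_{\mathbf v}$ (recursively). A subset of ANOVA terms is a set $U\subseteq\mathcal P(\mathcal D)$ such that $\mathbf u\in U$, $\mathbf v\subseteq\mathbf u$ imply $\mathbf v\in U$; $\mathrm T_Uf=\sum_{\mathbf u\in U}f_{\mathbf u}$. *)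

(* Defs.v *)
From HB Require Import structures.
From mathcomp Require Import all_boot all_order all_algebra.
From mathcomp Require Import all_classical all_reals all_analysis.
From mathcomp Require Import complex.

Set Implicit Arguments.
Unset Strict Implicit.
Unset Printing Implicit Defensive.

Import Order.TTheory GRing.Theory Num.Theory.
Import numFieldNormedType.Exports.
Local Open Scope classical_set_scope.
Local Open Scope ring_scope.

Section Anova.
Context {R : realType} {d : nat}.

(* Points of T^d are represented by d-tuples of reals (coordinates in [0,1)
   are the relevant ones; T = [0,1) with periodic identification).
   [upd x i t] replaces the i-th coordinate of x by t. *)
Definition upd (x : d.-tuple R) (i : 'I_d) (t : R) : d.-tuple R :=
  [tuple if j == i then t else tnth x j | j < d].

Definition cint (g : R -> R[i]) : R[i] :=
  Complex (Rintegral lebesgue_measure `[0%R, 1%R[ (fun t => complex.Re (g t)))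
          (Rintegral lebesgue_measure `[0%R, 1%R[ (fun t => complex.Im (g t))).

Definition int_coord (i : 'I_d) (g : d.-tuple R -> R[i]) : d.-tuple R -> R[i] :=
  fun x => cint (fun t => g (upd x i t)).

(* Projection P_u f (x) = \int_{T^{|u^c|}} f(x) dx_{u^c}, realized as the
   iterated integral over the coordinates of u^c (in increasing order). *)
Definition Pu (u : {set 'I_d}) (f : d.-tuple R -> R[i]) : d.-tuple R -> R[i] :=
  foldr int_coord f (enum (~: u)).

Definition int_all (g : d.-tuple R -> \bar R) : \bar R :=
  foldr (fun i h x => (\int[lebesgue_measure]_(t in `[0%R, 1%R[) h (upd x i t))%E)
        g (enum 'I_d) [tuple 0%R | _ < d].

(* f \in L_2(T^d): f measurable (product Borel sigma-algebra on d-tuples)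
   and \int_{T^d} |f|^2 < +oo (by Tonelli the iterated integral equals the
   integral w.r.t. the product Lebesgue measure). *)
Definition L2T (f : d.-tuple R -> R[i]) : Prop :=
  measurable_fun setT (fun x => complex.Re (f x)) /\
  measurable_fun setT (fun x => complex.Im (f x)) /\
  (int_all (fun x => ((complex.Re (f x)) ^+ 2 + (complex.Im (f x)) ^+ 2)%:E) < +oo)%E.

(* ANOVA terms f_u = P_u f - \sum_{v \subsetneq u} f_v, computed by
   recursion with a fuel parameter (fuel #|u| suffices). *)
Fixpoint anova_fuel (n : nat) (f : d.-tuple R -> R[i]) (u : {set 'I_d})
  : d.-tuple R -> R[i] :=
  match n with
  | 0 => Pu u f
  | n'.+1 => fun x => Pu u f x -
      \sum_(v : {set 'I_d} | v \proper u) anova_fuel n' f v x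
  end.

Definition anova (f : d.-tuple R -> R[i]) (u : {set 'I_d}) : d.-tuple R -> R[i] :=
  anova_fuel #|u| f u.

Definition anova_subset (U : {set {set 'I_d}}) : Prop :=
  forall u v : {set 'I_d}, u \in U -> v \subset u -> v \in U.

Definition TU (U : {set {set 'I_d}}) (f : d.-tuple R -> R[i]) : d.-tuple R -> R[i] :=
  fun x => \sum_(u in U) anova f u x.

End Anova.

(* Main.v *)
Require Import Defs.
From HB Require Import structures.
From mathcomp Require Import all_boot all_order all_algebra.
From mathcomp Require Import all_classical all_reals all_analysis.
From mathcomp Require Import complex.
Import Order.TTheory GRing.Theory Num.Theory.
Local Open Scope ring_scope.
Lemma alt0 (K : numDomainType) (I : finType) (w u : {set I}) :
  w \proper u ->
  \sum_(v : {set I} | (w \subset v) && (v \subset u)) (-1) ^+ (#|v| - #|w|) = 0 :> K.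
Proof.
case/properP=> swu [a au aw].
pose F (v : {set I}) : K := if (w \subset v) && (v \subset u)
   then (-1) ^+ (#|v| - #|w|) else 0.
rewrite big_mkcond /=.
pose t (v : {set I}) := if a \in v then v :\ a else a |: v.
have tK : involutive t.
  move=> v; rewrite /t; have [av|av] := boolP (a \in v).
    by rewrite !inE eqxx /= finset.setD1K.
  by rewrite !inE eqxx /= finset.setU1K.
have Ft : forall v, F (t v) = - F v.
  move=> v; rewrite /F /t; have [av|av] := boolP (a \in v).
  - have -> : (w \subset v :\ a) = (w \subset v) by rewrite finset.subsetD1 aw andbT.
    have -> : (v :\ a \subset u) = (v \subset u).
      apply/idP/idP => h; last exact: (fintype.subset_trans (finset.subD1set v a) h).
      by rewrite -(finset.setD1K av) finset.subUset finset.sub1set au h.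
    case: ifP => //; last by rewrite oppr0.
    case/andP=> wv _.
    have cv := finset.cardsD1 a v; rewrite av /= add1n in cv.
    have le : (#|w| <= #|v :\ a|)%N by apply: subset_leq_card; rewrite finset.subsetD1 wv aw.
    rewrite cv subSn // exprS mulN1r opprK //.
  - have -> : (w \subset a |: v) = (w \subset v).
      apply/idP/idP => h; last exact: fintype.subset_trans h (finset.subsetUr _ _).
      apply/fintype.subsetP => y yw; have := fintype.subsetP h y yw; rewrite !inE.
      by case/orP => // /eqP ey; rewrite -ey yw in aw.
    have -> : (a |: v \subset u) = (v \subset u) by rewrite finset.subUset finset.sub1set au.
    case: ifP => //; last by rewrite oppr0.
    case/andP=> wv _.
    have le : (#|w| <= #|v|)%N by apply: subset_leq_card.
    rewrite finset.cardsU1 av /= add1n subSn // exprS mulN1r //.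
have inj : injective t by apply: inv_inj.
have : \sum_v F v = \sum_v F (t v) by rewrite (reindex_inj inj).
under [in X in _ = X -> _]eq_bigr => v _ do rewrite Ft.
rewrite sumrN => /eqP; rewrite -subr_eq0 opprK -mulr2n mulrn_eq0 /= => /eqP.
done.
Qed.


Lemma anova_fuelE (R : realType) (d : nat) (f : d.-tuple R -> R[i]) x n :
  forall u : {set 'I_d}, (#|u| <= n)%N ->
  anova_fuel n f u x =
  \sum_(w : {set 'I_d} | w \subset u) (-1) ^+ (#|u| - #|w|) * Pu w f x.
Proof.
elim: n => [|n IH] u hu /=.
  have u0 : u = finset.set0 by apply/eqP; rewrite -cards_eq0 -leqn0.
  rewrite u0 (big_pred1 finset.set0) ?cards0 ?expr0 ?mul1r // => w.
  by rewrite finset.subset0.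
have -> : \sum_(v : {set 'I_d} | v \proper u) anova_fuel n f v x =
  \sum_(v : {set 'I_d} | v \proper u) \sum_(w : {set 'I_d} | w \subset v)
     (-1) ^+ (#|v| - #|w|) * Pu w f x.
  apply: eq_bigr => v vu; apply: IH; exact: leq_trans (proper_card vu) hu.
rewrite (exchange_big_dep (fun w : {set 'I_d} => w \subset u)) /=; last first.
  by move=> v w vu wv; apply: fintype.subset_trans wv (fintype.proper_sub vu).
rewrite [RHS](bigD1 u) //= subnn expr0 mul1r.
rewrite (bigD1 u) //= big_pred0; last first.
  by move=> v; rewrite fintype.properE; case: (v \subset u) => //=; case: (u \subset v).
rewrite GRing.add0r; congr (_ + _); rewrite -sumrN.
apply: eq_bigr => w /andP[wu wnu].
have pw : w \proper u by rewrite finset.properEneq wnu.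
rewrite -big_distrl /= -mulNr; congr (_ * _).
have := @alt0 (R[i]) _ _ _ pw.
rewrite (bigD1 u) /=; last by rewrite fintype.proper_sub // fintype.subxx.
move/eqP; rewrite addr_eq0 => /eqP ->; congr (- _).
apply: eq_bigl => v; rewrite finset.properEneq.
by case: (w \subset v); case: (v \subset u); rewrite ?andbT ?andbF.
Qed.

Theorem lemma4p4 (R : realType) (d : nat) (f : d.-tuple R -> R[i])
  (U : {set {set 'I_d}}) :
  L2T f -> anova_subset U ->
  forall x : d.-tuple R,
    TU U f x =
    \sum_(u in U) \sum_(v in U | u \subset v)
       (-1) ^+ (#|v| - #|u|) * Pu u f x.
Proof.
move=> _ hU x; rewrite /TU /anova.
have -> : \sum_(u in U) anova_fuel #|u| f u x =
  \sum_(u in U) \sum_(w : {set 'I_d} | w \subset u)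
     (-1) ^+ (#|u| - #|w|) * Pu w f x.
  by apply: eq_bigr => u _; apply: anova_fuelE.
by rewrite (exchange_big_dep (fun w : {set 'I_d} => w \in U)) //= => u w uU wu; exact: hU uU wu.
Qed.
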